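(* Let $B=\bigoplus_{i\in\mathbb{Z}}\mathbb{Z}_2$ and $L_2=B\rtimes\mathbb{Z}$ the lamplighter group (with $\mathbb{Z}=\langle t\rangle$ acting by shifting indices), equipped with a word metric from a finite generating set. There exist quasi-isometries $\Psi:L_2\to L_2$ that coarsely permute the left cosets of $\langle t\rangle$ such that the induced permutation $\psi:B\to B$ is not a generalized affine map.
   Context: Elements of $L_2$ are written $((x_i),k)$ with $((x_i),k)((y_i),\ell)=((x_i+y_{i-k}),k+\ell)$ and $t=(0,1)$. A quasi-isometry $\Psi$ coarsely permutes the left cosets of $\langle t\rangle$ if there are a permutation $\sigma$ of these cosets and $C'\ge0$ with $d_{\mathcal H}(\Psi(g\langle t\rangle),\sigma(g\langle t\rangle))<C'$ for all $g$ ($d_{\mathcal H}$ = Hausdorff distance). The coset $((x_i),k)\langle t\rangle$ is identified with $(x_i)\in B$, giving the induced permutation $\psi$ of $B$. An affine map of $B$ is a map $x\mapsto\varphi(x)+c$ with $\varphi$ a group automorphism of $B$ and $c\in B$; a generalized affine map is a composition of an affine map with a shift $(x_i)\mapsto(x_{i+k})$, $k\in\mathbb{Z}$. *)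

(* Defs.v *)
From Stdlib Require Import ZArith Lia.
Open Scope Z_scope.

Definition finsupp (f : Z -> bool) : Prop :=
  exists N : Z, forall i : Z, N < Z.abs i -> f i = false.

Definition B : Type := { f : Z -> bool | finsupp f }.
Definition Bval (x : B) : Z -> bool := proj1_sig x.

Lemma finsupp_zero : finsupp (fun _ => false).
Proof. exists 0; auto. Qed.
Definition Bzero : B := exist _ (fun _ => false) finsupp_zero.

Lemma finsupp_add (f g : Z -> bool) :
  finsupp f -> finsupp g -> finsupp (fun i => xorb (f i) (g i)).
Proof.
  intros [N HN] [M HM]; exists (Z.max N M); intros i Hi.
  rewrite HN, HM; [reflexivity| lia | lia].
Qed.
Definition Badd (x y : B) : B :=
  exist _ (fun i => xorb (Bval x i) (Bval y i))
    (finsupp_add _ _ (proj2_sig x) (proj2_sig y)).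

Lemma finsupp_shift (k : Z) (f : Z -> bool) :
  finsupp f -> finsupp (fun i => f (i + k)).
Proof.
  intros [N HN]; exists (N + Z.abs k); intros i Hi.
  apply HN; lia.
Qed.
Definition Bshift (k : Z) (x : B) : B :=
  exist _ (fun i => Bval x (i + k)) (finsupp_shift k _ (proj2_sig x)).

Lemma finsupp_delta0 : finsupp (fun i => Z.eqb i 0).
Proof. exists 0; intros i Hi; apply Z.eqb_neq; lia. Qed.
Definition Bdelta0 : B := exist _ (fun i => Z.eqb i 0) finsupp_delta0.

(** L_2 = B ⋊ Z, elements ((x_i),k),
    ((x_i),k)((y_i),l) = ((x_i + y_{i-k}), k+l). *)
Definition L2 : Type := (B * Z)%type.
Definition L2mul (g h : L2) : L2 :=
  (Badd (fst g) (Bshift (- snd g) (fst h)), snd g + snd h).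

(** The standard finite generating set {t, a} of L_2 (t = (0,1), a = (δ_0,0)),
    symmetrized: S ∪ S^{-1} = {t, t^{-1}, a}. *)
Definition gen (s : L2) : Prop :=
  s = (Bzero, 1) \/ s = (Bzero, -1) \/ s = (Bdelta0, 0).

(** dist_le g h n  <->  d_S(g,h) <= n for the (left-invariant) word metric
    d_S(g,h) = |g^{-1} h|_S. *)
Inductive dist_le : L2 -> L2 -> nat -> Prop :=
| dist_le_refl (g : L2) (n : nat) : dist_le g g n
| dist_le_step (g h s : L2) (n : nat) :
    gen s -> dist_le (L2mul g s) h n -> dist_le g h (S n).

(** Quasi-isometry L_2 -> L_2 (constants may be taken natural w.l.o.g. since
    the metric is integer valued). *)
Definition quasi_isometry (Psi : L2 -> L2) : Prop :=
  exists K C : nat,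
    (forall g h n, dist_le g h n -> dist_le (Psi g) (Psi h) (K * n + C)) /\
    (forall g h n, dist_le (Psi g) (Psi h) n -> dist_le g h (K * n + C)) /\
    (forall h, exists g, dist_le (Psi g) h C).

Definition hausdorff_le (A A' : L2 -> Prop) (C : nat) : Prop :=
  (forall a, A a -> exists b, A' b /\ dist_le a b C) /\
  (forall b, A' b -> exists a, A a /\ dist_le a b C).

Definition tcoset (g : L2) : L2 -> Prop :=
  fun h => exists m : Z, h = L2mul g (Bzero, m).
Definition image (Psi : L2 -> L2) (A : L2 -> Prop) : L2 -> Prop :=
  fun h => exists g, A g /\ h = Psi g.

(** The coset ((x_i),k)<t> is identified with (x_i) ∈ B; its representative
    is (x, 0). *)
Definition bijective {X Y : Type} (f : X -> Y) : Prop :=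
  exists g : Y -> X, (forall x, g (f x) = x) /\ (forall y, f (g y) = y).

Definition coarsely_permutes_cosets (Psi : L2 -> L2) (psi : B -> B) : Prop :=
  bijective psi /\
  exists C : nat, forall x : B,
    hausdorff_le (image Psi (tcoset (x, 0))) (tcoset (psi x, 0)) C.

Definition group_automorphism (phi : B -> B) : Prop :=
  (forall x y, phi (Badd x y) = Badd (phi x) (phi y)) /\ bijective phi.

Definition affine_map (f : B -> B) : Prop :=
  exists (phi : B -> B) (c : B), group_automorphism phi /\
    forall x, f x = Badd (phi x) c.

Definition generalized_affine (f : B -> B) : Prop :=
  exists (g : B -> B) (k : Z), affine_map g /\
    ((forall x, f x = Bshift k (g x)) \/ (forall x, f x = g (Bshift k x))).

(* Main.v *)
Require Import Defs.
From Stdlib Require Import ZArith Lia ProofIrrelevance FunctionalExtensionality.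
Open Scope Z_scope.

Lemma Beq (x y : B) : (forall i, Bval x i = Bval y i) -> x = y.
Proof.
  destruct x as [f pf], y as [g pg]; simpl; intro H.
  assert (f = g) by (apply functional_extensionality; exact H). subst g.
  f_equal; apply proof_irrelevance.
Qed.

Ltac bsolve :=
  cbn [Bval proj1_sig Badd Bshift Bdelta0 Bzero];
  repeat (match goal with |- context[Z.eqb ?a ?b] => destruct (Z.eqb_spec a b) end;
          try (exfalso; lia); try subst);
  cbn [Bval proj1_sig Badd Bshift Bdelta0 Bzero];
  repeat match goal with H : Bval _ _ = _ |- _ => rewrite H; clear H end;
  repeat match goal with |- context[Bval ?x ?j] => destruct (Bval x j) end;
  reflexivity.

Lemma finsupp_psi (x : B) :
  finsupp (fun i => if i =? 0 then xorb (Bval x 0) (Bval x 1 && Bval x 2) else Bval x i).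
Proof.
  destruct x as [f [N HN]]; simpl. exists (Z.max N 0); intros i Hi.
  destruct (Z.eqb_spec i 0); [lia|]. apply HN; lia.
Qed.

Definition psi (x : B) : B := exist _ _ (finsupp_psi x).
Definition Psi (g : L2) : L2 := (psi (fst g), snd g).
Definition flipb (y : B) (j : Z) : B := Badd y (Bshift (- j) Bdelta0).

Lemma psi_psi x : psi (psi x) = x.
Proof. apply Beq; intro i; unfold psi; bsolve. Qed.

Lemma Psi_Psi g : Psi (Psi g) = g.
Proof. destruct g; unfold Psi; simpl; rewrite psi_psi; reflexivity. Qed.

Lemma Badd_shift_zero x j : Badd x (Bshift j Bzero) = x.
Proof. apply Beq; intro i; bsolve. Qed.

Lemma dist_mono g h n : dist_le g h n -> forall m, (n <= m)%nat -> dist_le g h m.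
Proof.
  induction 1; intros m Hm. constructor.
  destruct m as [|m]; [lia|]. eapply dist_le_step; eauto. apply IHdist_le; lia.
Qed.

Lemma dist_trans g h n : dist_le g h n -> forall k m, dist_le h k m -> dist_le g k (n + m).
Proof.
  induction 1; intros k m Hk.
  - eapply dist_mono; eauto; lia.
  - simpl. eapply dist_le_step; eauto.
Qed.

Lemma step_gen g s h : gen s -> L2mul g s = h -> dist_le g h 1.
Proof. intros Hs <-. eapply dist_le_step; eauto. constructor. Qed.

Lemma move_t y k k' : k' = k + 1 -> dist_le (y, k) (y, k') 1.
Proof.
  intros ->. apply step_gen with (Bzero, 1); [left; reflexivity|].
  unfold L2mul; simpl; rewrite Badd_shift_zero; reflexivity.
Qed.

Lemma move_ti y k k' : k' = k - 1 -> dist_le (y, k) (y, k') 1.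
Proof.
  intros ->. apply step_gen with (Bzero, -1); [right; left; reflexivity|].
  unfold L2mul; simpl; rewrite Badd_shift_zero; f_equal; lia.
Qed.

Lemma move_a y y' k : (forall i, Bval y' i = xorb (Bval y i) (i =? k)) ->
  dist_le (y, k) (y', k) 1.
Proof.
  intros H. apply step_gen with (Bdelta0, 0); [right; right; reflexivity|].
  unfold L2mul; simpl. f_equal; [|lia]. apply Beq; intro i; rewrite H; bsolve.
Qed.

Lemma key x k : dist_le (psi x, k) (psi (flipb x k), k) 6.
Proof.
  destruct (Z.eq_dec k 1) as [->|n1]; [|destruct (Z.eq_dec k 2) as [->|n2]].
  - destruct (Bval x 2) eqn:E.
    + set (y1 := flipb (psi x) 1).
      set (y2 := flipb y1 0).
      apply dist_mono with (1 + (1 + (1 + 1)))%nat; [|lia].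
      apply dist_trans with (y1, 1). apply move_a; intro i; unfold y1, flipb; bsolve.
      apply dist_trans with (y1, 0). apply move_ti; lia.
      apply dist_trans with (y2, 0). apply move_a; intro i; unfold y2, flipb; bsolve.
      replace (psi (flipb x 1)) with y2. apply move_t; lia.
      apply Beq; intro i; unfold y2, y1, flipb, psi; bsolve.
    + apply dist_mono with 1%nat; [|lia]. apply move_a; intro i; unfold flipb, psi; bsolve.
  - destruct (Bval x 1) eqn:E.
    + set (y1 := flipb (psi x) 2).
      set (y2 := flipb y1 0).
      apply dist_mono with (1 + (1 + (1 + (1 + (1 + 1)))))%nat; [|lia].
      apply dist_trans with (y1, 2). apply move_a; intro i; unfold y1, flipb; bsolve.
      apply dist_trans with (y1, 1). apply move_ti; lia.
      apply dist_trans with (y1, 0). apply move_ti; lia.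
      apply dist_trans with (y2, 0). apply move_a; intro i; unfold y2, flipb; bsolve.
      apply dist_trans with (y2, 1). apply move_t; lia.
      replace (psi (flipb x 2)) with y2. apply move_t; lia.
      apply Beq; intro i; unfold y2, y1, flipb, psi; bsolve.
    + apply dist_mono with 1%nat; [|lia]. apply move_a; intro i; unfold flipb, psi; bsolve.
  - apply dist_mono with 1%nat; [|lia]. apply move_a; intro i; unfold flipb, psi; bsolve.
Qed.

Lemma Psi_step g s : gen s -> dist_le (Psi g) (Psi (L2mul g s)) 6.
Proof.
  destruct g as [x k]; intros [ -> | [ -> | -> ] ]; unfold Psi, L2mul; simpl.
  - rewrite Badd_shift_zero. apply dist_mono with 1%nat; [apply move_t; lia|lia].
  - rewrite Badd_shift_zero. apply dist_mono with 1%nat; [apply move_ti; lia|lia].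
  - replace (k + 0) with k by lia. apply key.
Qed.

Lemma Psi_lip g h n : dist_le g h n -> dist_le (Psi g) (Psi h) (6 * n).
Proof.
  induction 1. constructor.
  replace (6 * S n)%nat with (6 + 6 * n)%nat by lia.
  eapply dist_trans; [apply Psi_step; eassumption| exact IHdist_le].
Qed.

Lemma affine_D g : affine_map g -> forall x y i,
  xorb (xorb (Bval (g x) i) (Bval (g y) i)) (xorb (Bval (g (Badd x y)) i) (Bval (g Bzero) i)) = false.
Proof.
  intros [phi [c [[Hadd _] Hg]]] x y i.
  rewrite !Hg, Hadd.
  assert (H0 : phi Bzero = Badd (phi Bzero) (phi Bzero)).
  { rewrite <- Hadd. f_equal. apply Beq; intro j; reflexivity. }
  assert (Bval (phi Bzero) i = false).
  { rewrite H0 at 1. simpl. destruct (Bval (phi Bzero) i); reflexivity. }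
  cbn [Bval proj1_sig Badd] in *. rewrite H.
  destruct (Bval (phi x) i), (Bval (phi y) i), (Bval c i); reflexivity.
Qed.

Definition d1 : B := Bshift (-1) Bdelta0.
Definition d2 : B := Bshift (-2) Bdelta0.

Lemma psi_D : xorb (xorb (Bval (psi d1) 0) (Bval (psi d2) 0))
  (xorb (Bval (psi (Badd d1 d2)) 0) (Bval (psi Bzero) 0)) = true.
Proof. reflexivity. Qed.

Theorem theorem1p2 :
  exists (Psi : L2 -> L2) (psi : B -> B),
    quasi_isometry Psi /\ coarsely_permutes_cosets Psi psi /\
    ~ generalized_affine psi.
Proof.
  exists Psi, psi. split; [|split].
  - exists 6%nat, 0%nat. split; [|split].
    + intros g h n H. rewrite Nat.add_0_r. apply Psi_lip; auto.
    + intros g h n H. rewrite Nat.add_0_r. rewrite <- (Psi_Psi g), <- (Psi_Psi h).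
      apply Psi_lip; auto.
    + intros h. exists (Psi h). rewrite Psi_Psi. constructor.
  - split. { exists psi; split; apply psi_psi. }
    exists 0%nat. intros x. split.
    + intros a [g [[m ->] ->]]. exists (L2mul (psi x, 0) (Bzero, m)).
      split; [exists m; reflexivity|].
      replace (L2mul (psi x, 0) (Bzero, m)) with (Psi (L2mul (x, 0) (Bzero, m))); [constructor|].
      unfold Psi, L2mul; simpl; rewrite !Badd_shift_zero; reflexivity.
    + intros b [m ->]. exists (Psi (L2mul (x, 0) (Bzero, m))).
      split; [exists (L2mul (x, 0) (Bzero, m)); split; [exists m; reflexivity|reflexivity]|].
      replace (L2mul (psi x, 0) (Bzero, m)) with (Psi (L2mul (x, 0) (Bzero, m))); [constructor|].
      unfold Psi, L2mul; simpl; rewrite !Badd_shift_zero; reflexivity.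
  - intros [g [k [Ha [Hc|Hc]]]].
    + pose proof psi_D as HD. rewrite !Hc in HD. cbn [Bval proj1_sig Bshift] in HD.
      rewrite (affine_D g Ha d1 d2 (0 + k)) in HD. discriminate.
    + pose proof psi_D as HD. rewrite !Hc in HD.
      assert (E1 : Bshift k (Badd d1 d2) = Badd (Bshift k d1) (Bshift k d2)) by (apply Beq; intro i; reflexivity).
      assert (E2 : Bshift k Bzero = Bzero) by (apply Beq; intro i; reflexivity).
      rewrite E1, E2, affine_D in HD; [discriminate|exact Ha].
Qed.
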